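(* Let $m\equiv1\pmod 8$ be a square-free integer all of whose prime factors are $\equiv\pm1\pmod 8$. Then $m\equiv1\pmod{16}$ if and only if $\left(\frac{2+\sqrt2}{|m|}\right)=1$.
   Context: For each prime $p\equiv\pm1\pmod 8$, $2$ is a square modulo $p$; for $p\mid m$ choose $s_p$ with $s_p^2\equiv2\pmod p$. Then $\left(\frac{2+\sqrt2}{|m|}\right):=\prod_{p\mid m}\left(\frac{2+s_p}{p}\right)$ (product of Legendre symbols), which is independent of the choices of $s_p$ since $(2+s_p)(2-s_p)\equiv 2$ is a nonzero square mod $p$; equivalently it is $\prod_{p\mid m}(2+\sqrt2,|m|)_p$ with $\sqrt2\in\mathbb{Q}_p$ and $(\cdot,\cdot)_p$ the Hilbert symbol. *)

(* Defs.v *)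
From mathcomp Require Import all_boot all_order all_algebra.
Set Implicit Arguments. Unset Strict Implicit. Unset Printing Implicit Defensive.
Import Order.TTheory GRing.Theory Num.Theory.
Local Open Scope ring_scope.

Definition legendre (p : nat) (a : int) : int :=
  if (p%:Z %| a)%Z then 0
  else if [exists x : 'I_p, (p%:Z %| (x%:Z) ^+ 2 - a)%Z] then 1 else -1.

Definition squarefree (n : nat) : Prop :=
  forall p : nat, prime p -> ~~ (p * p %| n)%N.

(* ((2 + sqrt 2) / |m|) := prod_{p | m} ((2 + s_p) / p), given a choice
   s p of a square root of 2 modulo each prime p dividing m. *)
Definition sym2sqrt2 (m : int) (s : nat -> int) : int :=
  \prod_(p <- primes `|m|%N) legendre p (2 + s p).

(* Main.v *)
Require Import Defs.
From mathcomp Require Import all_boot all_order all_algebra all_field.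
From mathcomp Require Import zify ring.
Set Implicit Arguments. Unset Strict Implicit. Unset Printing Implicit Defensive.
Import Order.TTheory GRing.Theory Num.Theory.
Local Open Scope ring_scope.

Lemma fermatFp (p : nat) (x : 'F_p) : prime p -> x != 0 -> x ^+ p.-1 = 1.
Proof.
move=> pr nz; have := expf_card x; rewrite card_Fp //.
have p0 : (0 < p)%N by apply: prime_gt0.
move=> e; have : x * x ^+ p.-1 = x * 1 by rewrite -exprS prednK // mulr1.
by move/(mulfI nz).
Qed.

Lemma natFp_eq0 (p i : nat) : prime p -> ((i%:R : 'F_p) == 0) = (p %| i)%N.
Proof. by move=> pr; rewrite (dvdn_pcharf (pchar_Fp pr)). Qed.

Lemma euler_sq (p : nat) (y : 'F_p) : prime p -> (2 < p)%N -> y != 0 ->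
  y ^+ (p.-1)./2 = 1 -> exists x : 'F_p, x ^+ 2 = y.
Proof.
move=> pr p2 y0 yk.
have podd : odd p by apply/negPn/negP => /(prime_oddPn pr) e; rewrite e in p2.
set k := (p.-1)./2.
have pk : p.-1 = (k.*2)%N.
  by rewrite /k -[in LHS](odd_double_half p.-1) -subn1 oddB ?prime_gt0 // podd.
have k0 : (0 < k)%N by rewrite /k; lia.
case: (boolP [exists x : 'F_p, x ^+ 2 == y]) => [/existsP[x /eqP]|nsq]; first by exists x.
exfalso.
pose rs := y :: [seq (i%:R : 'F_p) ^+ 2 | i <- iota 1 k].
have := @max_poly_roots _ ('X^k - 1) rs.
rewrite size_Xn_sub_1 // /rs /= size_map size_iota ltnn.
have -> : ('X^k - 1 : {poly 'F_p}) != 0 by rewrite -size_poly_gt0 size_Xn_sub_1.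
have ir i : i \in iota 1 k -> (i%:R : 'F_p) != 0.
  by rewrite mem_iota natFp_eq0 // => /andP[i1 ik]; apply/negP => /dvdn_leq; lia.
rewrite /root !hornerE yk subrr eqxx /=.
have -> : all (root ('X^k - 1)) [seq (i%:R : 'F_p) ^+ 2 | i <- iota 1 k].
  apply/allP => _ /mapP[i ii ->]; rewrite /root !hornerE -exprM.
  by rewrite mul2n -pk fermatFp // ?ir // subrr.
have -> : y \notin [seq (i%:R : 'F_p) ^+ 2 | i <- iota 1 k].
  apply/mapP => -[i _ yi]; move/existsP: nsq; apply; exists (i%:R); by rewrite yi.
move/(_ isT isT) => H; suff : false by []; apply: H; rewrite map_inj_in_uniq ?iota_uniq //.
move=> i j; rewrite !mem_iota => /andP[i1 ik] /andP[j1 jk] /eqP.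
rewrite -subr_eq0 subr_sqr mulf_eq0 => /orP[|].
  wlog ij : i j i1 ik j1 jk / (i <= j)%N.
    move=> H; case: (leqP i j) => [/H|/ltnW ji]; first by apply.
    by rewrite -opprB oppr_eq0 => /(H j i j1 jk i1 ik ji) ->.
  rewrite -(subnK ij) natrD opprD addrCA subrr addr0 oppr_eq0 natFp_eq0 // => /dvdn_leq.
  case E: (j - i)%N => [|n]; first by rewrite add0n.
  lia.
by rewrite -natrD natFp_eq0 // => /dvdn_leq; lia.
Qed.
Lemma core_alg (L : fieldType) (p k : nat) (a z : L) : p \in [pchar L] ->
  (2%:R : L) != 0 -> a ^+ 2 = 2 -> z ^+ 2 = a * z - 1 ->
  (p = 2 * k + 1)%N -> (p %% 8 = 1 \/ p %% 8 = 7)%N ->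
  (2 + a) ^+ k = if (p %% 16 == 1)%N || (p %% 16 == 15)%N then 1 else -1.
Proof.
move=> chp two0 a2 z2 pk p8.
have z4 : z ^+ 4 = -1.
  have -> : z ^+ 4 = (z ^+ 2) ^+ 2 by rewrite -exprM.
  rewrite z2 sqrrB exprMn a2 z2; ring.
have z8 : z ^+ 8 = 1 by rewrite (_ : 8 = 4 * 2)%N // exprM z4 sqrrN expr1n.
have z16 : z ^+ 16 = 1 by rewrite (_ : 16 = 8 * 2)%N // exprM z8 expr1n.
have z1 : 1 + z != 0.
  apply/negP => /eqP zE; have zm : z = -1 by rewrite -(subr0 z) -zE; ring.
  move: z2; rewrite zm sqrrN expr1n => /eqP; rewrite -subr_eq0.
  have -> : 1 - (a * -1 - 1) = a + 2 by ring.
  rewrite addr_eq0 => /eqP aE; move: a2; rewrite aE sqrrN => /eqP.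
  rewrite -subr_eq0 (_ : (2 : L) ^+ 2 - 2 = 2) ?(negbTE two0) //; ring.
have key : z ^+ k * (2 + a) ^+ k * (1 + z) = 1 + z ^+ p.
  have e1 : z * (2 + a) = (1 + z) ^+ 2 by rewrite sqrrD z2; ring.
  rewrite -exprMn e1 -exprM -exprSr (_ : (2 * k).+1 = p)%N; last by lia.
  by rewrite -!(pFrobenius_autE chp) pFrobenius_autD_comm ?pFrobenius_aut1 //; exact: mulrC.
have pE := divn_eq p 16.
set j := (p %/ 16)%N in pE.
have zp r : z ^+ (j * 16 + r) = z ^+ r by rewrite exprD mulnC exprM z16 expr1n mul1r.
have zk t : z ^+ (j * 8 + t) = z ^+ t by rewrite exprD mulnC exprM z8 expr1n mul1r.
have r16 : (p %% 16 = 1 \/ p %% 16 = 7 \/ p %% 16 = 9 \/ p %% 16 = 15)%N by lia.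
have canc (c : L) : c * (1 + z) = 0 -> c = 0.
  by move/eqP; rewrite mulf_eq0 (negbTE z1) orbF => /eqP.
case: r16 => [r|[r|[r|r]]]; rewrite r /=.
- have kE : k = (j * 8 + 0)%N by lia.
  move: key; rewrite pE r zp {1}kE zk expr0 mul1r => /eqP; rewrite -subr_eq0 expr1.
  rewrite -{2}[1 + z]mul1r -mulrBl => /eqP /canc /eqP; rewrite subr_eq0 => /eqP //.
- have kE : k = (j * 8 + 3)%N by lia.
  move: key; rewrite pE r zp {1}kE zk => /eqP; rewrite -subr_eq0.
  have -> : z ^+ 3 * (2 + a) ^+ k * (1 + z) - (1 + z ^+ 7)
    = z ^+ 3 * ((2 + a) ^+ k + 1) * (1 + z) - (1 + z ^+ 4 * z ^+ 3 + z ^+ 3 + z ^+ 4).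
    by rewrite -!exprD; ring.
  rewrite z4 (_ : 1 + - 1 * z ^+ 3 + z ^+ 3 + - 1 = 0 :> L); last by ring.
  rewrite subr0 => /eqP /canc /eqP; rewrite mulf_eq0 expf_eq0 /=.
  have zn : z != 0 by apply/negP => /eqP z0; move: z4; rewrite z0 expr0n /= => /eqP; rewrite eq_sym oppr_eq0 oner_eq0.
  rewrite (negbTE zn) /= addr_eq0 => /eqP //.
- have kE : k = (j * 8 + 4)%N by lia.
  move: key; rewrite pE r zp {1}kE zk z4 => /eqP; rewrite -subr_eq0.
  have -> : - 1 * (2 + a) ^+ k * (1 + z) - (1 + z ^+ 9)
    = - ((2 + a) ^+ k + 1) * (1 + z) + (z - z ^+ 8 * z).
    by rewrite -exprSr; ring.
  rewrite z8 mul1r subrr addr0 mulNr oppr_eq0 => /eqP /canc /eqP.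
  by rewrite addr_eq0 => /eqP.
- have kE : k = (j * 8 + 7)%N by lia.
  move: key; rewrite pE r zp {1}kE zk => /eqP; rewrite -subr_eq0.
  have -> : z ^+ 7 * (2 + a) ^+ k * (1 + z) - (1 + z ^+ 15)
    = z ^+ 4 * z ^+ 3 * ((2 + a) ^+ k - 1) * (1 + z) + (z ^+ 4 * z ^+ 3 + z ^+ 4 * z ^+ 4 - 1 - z ^+ 8 * z ^+ 4 * z ^+ 3).
    by rewrite -!exprD; ring.
  rewrite z8 z4 (_ : - 1 * z ^+ 3 + - 1 * - 1 - 1 - 1 * - 1 * z ^+ 3 = 0 :> L); last by ring.
  rewrite addr0 => /eqP /canc /eqP; rewrite mulf_eq0 mulN1r oppr_eq0 expf_eq0 /=.
  have zn : z != 0 by apply/negP => /eqP z0; move: z4; rewrite z0 expr0n /= => /eqP; rewrite eq_sym oppr_eq0 oner_eq0.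
  by rewrite (negbTE zn) /= subr_eq0 => /eqP.
Qed.

Lemma legendreE (p : nat) (a : int) : prime p ->
  legendre p a = if (a%:~R : 'F_p) == 0 then 0
     else if [exists x : 'F_p, x ^+ 2 == a%:~R] then 1 else -1.
Proof.
move=> pr; rewrite /legendre (dvdz_pcharf (pchar_Fp pr)).
case: (_ == 0) => //.
have -> : [exists x : 'I_p, (p%:Z %| (x%:Z) ^+ 2 - a)%Z] =
          [exists x : 'F_p, x ^+ 2 == a%:~R].
  apply/existsP/existsP => [[x]|[x]].
    rewrite (dvdz_pcharf (pchar_Fp pr)) rmorphB rmorphXn /= subr_eq0 => H.
    by exists (x%:R).
  move=> H.
  have xp : (val x < p)%N by have := ltn_ord x; rewrite [X in (_ < X)%N -> _](Fp_cast pr).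
  exists (Ordinal xp).
  rewrite (dvdz_pcharf (pchar_Fp pr)) rmorphB rmorphXn /= subr_eq0.
  by rewrite -pmulrn natr_Zp.
by [].
Qed.
Definition chi (p : nat) : int :=
  if (p %% 16 == 1)%N || (p %% 16 == 15)%N then 1 else -1.

Lemma leg_prime (p : nat) (s : int) : prime p -> (p %% 8 = 1 \/ p %% 8 = 7)%N ->
  (p%:Z %| s ^+ 2 - 2)%Z -> legendre p (2 + s) = chi p.
Proof.
move=> pr p8 ds.
have chF := pchar_Fp pr.
have p2 : (2 < p)%N by have := prime_gt1 pr; case: p8 => E H; lia.
have two0 : (2%:R : 'F_p) != 0 by rewrite -(dvdn_pcharf chF); apply/negP => /dvdn_leq; lia.
set sig := (s%:~R : 'F_p).
have sig2 : sig ^+ 2 = 2.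
  by apply/eqP; rewrite -subr_eq0; move: ds; rewrite (dvdz_pcharf chF) rmorphB rmorphXn /=.
set y := (2 + sig).
have yE : ((2 + s)%:~R : 'F_p) = y by rewrite rmorphD.
have y0 : y != 0.
  rewrite /y addr_eq0; apply/negP => /eqP sE.
  have sm : sig = -2 by rewrite sE opprK.
  move: sig2; rewrite sm sqrrN => /eqP; rewrite -subr_eq0 (_ : (2 : 'F_p) ^+ 2 - 2 = 2) ?(negbTE two0) //.
  by rewrite expr2 -natrM -natrB.
have podd : odd p by case: p8 => E; rewrite (divn_eq p 8) E oddD oddM andbF.
set k := (p.-1)./2.
have pk' : p.-1 = k.*2.
  by rewrite /k -[in LHS](odd_double_half p.-1) -subn1 oddB ?prime_gt0 // podd.
have pk : p = (2 * k + 1)%N by lia.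
have yk : y ^+ k = if (p %% 16 == 1)%N || (p %% 16 == 15)%N then 1 else -1.
  pose q : {poly 'F_p} := 'X^2 + (- (sig%:P * 'X) + 1).
  have sq : size q = 3%N.
    rewrite /q size_polyDl size_polyXn //.
    rewrite (leq_ltn_trans (size_polyD _ _)) // size_polyC oner_neq0 size_polyN.
    by rewrite gtn_max andbT mul_polyC (leq_ltn_trans (size_scale_leq _ _)) // size_polyX.
  have q0 : q != 0 by rewrite -size_poly_gt0 sq.
  have [L [rs qrs _]] := FinSplittingFieldFor q0.
  have := eqp_size qrs; rewrite size_map_poly sq size_prod_XsubC.
  case: rs qrs => // z rs qrs _.
  have : root (map_poly (in_alg L) q) z by rewrite (eqp_root qrs) root_prod_XsubC mem_head.
  rewrite /root /q !rmorphD rmorphN rmorphM rmorph1 /= rmorphM map_polyX /= map_polyC /=.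
  rewrite !hornerE => zq.
  have chL : p \in [pchar L] by rewrite pchar_lalg.
  have two0L : (2%:R : L) != 0 by rewrite -(dvdn_pcharf chL); apply/negP => /dvdn_leq; lia.
  have a2 : (sig%:A : L) ^+ 2 = 2 by rewrite -in_algE -rmorphXn sig2 rmorph_nat.
  have z2 : z ^+ 2 = sig%:A * z - 1.
    move: zq; rewrite map_polyX hornerX => /eqP zq.
    have zq2 : z * z - sig%:A * z + 1 = 0 by exact: zq.
    rewrite -[LHS]subr0 -zq2; ring.
  have := core_alg chL two0L a2 z2 pk p8.
  move=> H; apply: (fmorph_inj (in_alg L)); rewrite rmorphXn /y rmorphD rmorph_nat ?in_algE H.
  by case: ifP => _; rewrite ?rmorph1 ?rmorphN1.
rewrite legendreE // yE (negbTE y0) /chi.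
case: ifP yk => _ yk.
  have [x xE] := euler_sq pr p2 y0 yk.
  have -> // : [exists x, x ^+ 2 == y] by apply/existsP; exists x; rewrite xE.
case: existsP => // -[x /eqP xE].
have x0 : x != 0 by apply/negP => /eqP x0; move: y0; rewrite -xE x0 expr0n.
move: yk; rewrite -xE -exprM mul2n -pk' fermatFp // => /eqP.
rewrite -subr_eq0 opprK (_ : (1 : 'F_p) + 1 = 2) ?(negbTE two0) //.
Qed.

Definition good (n : nat) : bool := ((n %% 8 == 1) || (n %% 8 == 7))%N.

Lemma chi_mod (n : nat) : chi n = chi (n %% 16).
Proof. by rewrite /chi modn_mod. Qed.

Lemma chiM (a b : nat) : good a -> good b -> chi (a * b) = chi a * chi b /\ good (a * b).
Proof.
move=> ga gb.
have ra : (a %% 16 = 1 \/ a %% 16 = 7 \/ a %% 16 = 9 \/ a %% 16 = 15)%N by move: ga; rewrite /good; lia.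
have rb : (b %% 16 = 1 \/ b %% 16 = 7 \/ b %% 16 = 9 \/ b %% 16 = 15)%N by move: gb; rewrite /good; lia.
have gE n : good n = ((n %% 16 == 1) || (n %% 16 == 7) || (n %% 16 == 9) || (n %% 16 == 15))%N.
  rewrite /good; apply/idP/idP; lia.
rewrite gE chi_mod [chi a]chi_mod [chi b]chi_mod -modnMm.
by case: ra => [->|[->|[->|->]]]; case: rb => [->|[->|[->|->]]].
Qed.

Lemma chi_prod (ps : seq nat) : all good ps ->
  \prod_(p <- ps) chi p = chi (\prod_(p <- ps) p)%N /\ good (\prod_(p <- ps) p)%N.
Proof.
elim: ps => [|a ps IH]; first by rewrite !big_nil.
rewrite /= => /andP[ga /IH [e g]]; rewrite !big_cons e.
by have [-> ->] := chiM ga g.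
Qed.

Lemma sqfree_prod (n : nat) : (0 < n)%N -> squarefree n -> n = (\prod_(p <- primes n) p)%N.
Proof.
move=> n0 sq; rewrite {1}(prod_prime_decomp n0) prime_decompE big_map /=.
apply: eq_big_seq => p pp.
have pr : prime p by move: pp; rewrite mem_primes => /andP[].
have l0 : (0 < logn p n)%N by rewrite logn_gt0.
suff : (logn p n < 2)%N by case: (logn p n) l0 => [|[|]].
rewrite ltnNge -pfactor_dvdn // -mulnn; exact: sq.
Qed.

Theorem lemma5p4 (m : int) (s : nat -> int) :
  (m %% 8)%Z = 1 ->
  squarefree `|m|%N ->
  (forall p : nat, prime p -> (p %| `|m|)%N ->
     (p %% 8 = 1)%N \/ (p %% 8 = 7)%N) ->
  (forall p : nat, prime p -> (p %| `|m|)%N ->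
     (p%:Z %| s p ^+ 2 - 2)%Z) ->
  ((m %% 16)%Z = 1 <-> sym2sqrt2 m s = 1).
Proof.
move=> m8 sq p8 ps.
have n0 : (0 < `|m|)%N by lia.
have -> : sym2sqrt2 m s = \prod_(p <- primes `|m|) chi p.
  apply: eq_big_seq => p; rewrite mem_primes => /and3P[pr _ pd].
  exact: leg_prime (p8 p pr pd) (ps p pr pd).
have gp : all good (primes `|m|).
  apply/allP => p; rewrite mem_primes => /and3P[pr _ pd].
  by rewrite /good; case: (p8 p pr pd) => ->.
have [-> _] := chi_prod gp; rewrite -sqfree_prod //.
rewrite /chi; case: ifP => h.
  split => // _; move: h; lia.
split => // h2; move: h; lia.
Qed.
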